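(* Let $0<c_1\le c_2$ be constants, let $n$ be sufficiently large, let $t\in[1,n^{0.1}]$, and let $H$ be an undirected graph on $n$ vertices in which every vertex has degree between $c_1t$ and $c_2t$ and which has no cycle of length at most $8$. Then any two distinct maximal cliques of $H^2$ have at most one vertex in common.
   Context: $H^2$ (the square of $H$) is the graph on the vertex set of $H$ in which $u\neq v$ are adjacent if and only if there is a path of length exactly $2$ between $u$ and $v$ in $H$. *)

(* Defs.v *)
From mathcomp Require Import all_boot.
From Stdlib Require Import Reals.
Set Implicit Arguments. Unset Strict Implicit. Unset Printing Implicit Defensive.

Definition simple_graph (V : finType) (e : rel V) : Prop :=
  symmetric e /\ irreflexive e.

Definition deg (V : finType) (e : rel V) (v : V) : nat := #|[set w | e v w]|.

Definition no_cycle_upto (V : finType) (e : rel V) (k : nat) : Prop :=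
  forall s : seq V, uniq s -> (3 <= size s <= k)%N -> ~~ cycle e s.

Definition sq_rel (V : finType) (e : rel V) : rel V :=
  fun u v => (u != v) && [exists w, e u w && e w v].

Definition is_clique (V : finType) (r : rel V) (K : {set V}) : Prop :=
  forall u v, u \in K -> v \in K -> u != v -> r u v.

Definition maximal_clique (V : finType) (r : rel V) (K : {set V}) : Prop :=
  is_clique r K /\ (forall K' : {set V}, is_clique r K' -> K \subset K' -> K' = K).

(* Main.v *)
Require Import Defs.
From mathcomp Require Import all_boot.
From Stdlib Require Import Reals.

Lemma key (V : finType) (e : rel V) :
  symmetric e -> irreflexive e -> no_cycle_upto e 8 ->
  forall x y z w a b : V, x != y -> x != z -> y != z ->
  e x w -> e w y -> e x a -> e a z -> e y b -> e b z -> e w z.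
Proof.
move=> sym irr nc x y z w a b nxy nxz nyz xw wy xa az yb bz.
have notri : forall u v t, e u v -> e v t -> e t u -> False.
  move=> u v t uv vt tu.
  have uvne : u != v by apply/eqP => E; subst; rewrite irr in uv.
  have vtne : v != t by apply/eqP => E; subst; rewrite irr in vt.
  have tune : t != u by apply/eqP => E; subst; rewrite irr in tu.
  have U : uniq [:: u; v; t] by rewrite /= !inE !negb_or uvne eq_sym tune vtne.
  by move: (nc _ U isT); rewrite /= uv vt tu.
have wx := xw; rewrite sym in wx.
have yw := wy; rewrite sym in yw.
have ax := xa; rewrite sym in ax.
have za := az; rewrite sym in za.
have byy := yb; rewrite sym in byy.
have zb := bz; rewrite sym in zb.
case: (eqVneq a w) => [<- //|naw].
case: (eqVneq b w) => [<- //|nbw].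
exfalso.
Ltac fin irr notri :=
  repeat (apply/andP; split); try done; apply/eqP => E; subst;
  first [ match goal with H : is_true (?u != ?u) |- _ => by rewrite eqxx in H end
        | match goal with H : is_true (_ ?u ?u) |- _ => by rewrite irr in H end
        | match goal with H1 : is_true (_ ?u ?v), H2 : is_true (_ ?v ?t), H3 : is_true (_ ?t ?u) |- _ => exact: notri H1 H2 H3 end ].
case: (eqVneq a b) => [Eab|nab].
  subst b.
  have U : uniq [:: x; w; y; a] by rewrite /= !inE !negb_or; fin irr notri.
  by move: (nc _ U isT); rewrite /= xw wy yb ax.
have U : uniq [:: x; w; y; b; z; a] by rewrite /= !inE !negb_or; fin irr notri.
by move: (nc _ U isT); rewrite /= xw wy yb bz za ax.
Qed.

Theorem lemmaA4 :
  forall c1 c2 : R, (0 < c1)%R -> (c1 <= c2)%R ->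
  exists N : nat, forall n : nat, (N <= n)%N ->
  forall t : R, (1 <= t)%R -> (t <= Rpower (INR n) (1/10))%R ->
  forall (V : finType) (e : rel V),
    #|V| = n ->
    simple_graph e ->
    (forall v : V, (c1 * t <= INR (deg e v))%R /\ (INR (deg e v) <= c2 * t)%R) ->
    no_cycle_upto e 8 ->
    forall K1 K2 : {set V},
      maximal_clique (sq_rel e) K1 -> maximal_clique (sq_rel e) K2 -> K1 != K2 ->
      (#|K1 :&: K2| <= 1)%N.
Proof.
move=> c1 c2 _ _; exists 0%N => n _ t _ _ V e _ [sym irr] _ nc K1 K2 M1 M2 ne.
rewrite leqNgt; apply/negP => /card_gt1P; case=> x [y [xA yA nxy]].
move: xA yA; rewrite !inE => /andP [x1 x2] /andP [y1 y2].
have [w /andP [xw wy]] : exists w, e x w && e w y.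
  by case: M1 => C _; move: (C x y x1 y1 nxy); rewrite /sq_rel => /andP [_ /existsP].
have NC : is_clique (sq_rel e) [set v | e w v].
  move=> u v; rewrite !inE => wu wv nuv; apply/andP; split => //.
  by apply/existsP; exists w; rewrite sym wu wv.
have E : forall K, maximal_clique (sq_rel e) K -> x \in K -> y \in K -> K = [set v | e w v].
  move=> K [C M] xK yK; apply/esym/M => //.
  apply/subsetP => z zK; rewrite inE.
  case: (eqVneq z x) => [->|nzx]; first by rewrite sym.
  case: (eqVneq z y) => [->|nzy]; first by [].
  have nxz : x != z by rewrite eq_sym.
  have nyz : y != z by rewrite eq_sym.
  move: (C x z xK zK nxz); rewrite /sq_rel => /andP [_ /existsP [a /andP [xa az]]].
  move: (C y z yK zK nyz); rewrite /sq_rel => /andP [_ /existsP [b /andP [yb bz]]].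
  exact: (@key V e sym irr nc x y z w a b nxy nxz nyz xw wy xa az yb bz).
by move/eqP: ne; apply; rewrite (E _ M1 x1 y1) (E _ M2 x2 y2).
Qed.
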